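(* (i) For every $n\ge0$ and $i\in\{0,1\}$, $\hat\epsilon_n(x,i)=v_n(x,i)-\hat v_n(x,i)$ is nondecreasing in $x$ (equivalently $\Delta_n(x,i)\le\hat\Delta_n(x,i)$ for all $x\ge0$). (ii) For every $n\ge 1$, $\hat B^d_n\le B^d_n$.
   Context: Parameters: $\lambda>0$, $0<\mu_l<\mu_h$, $\delta=\mu_h-\mu_l$, $R\ge 0$, $c>0$, and $h:\{0,1,2,\dots\}\to\mathbb{R}$ nondecreasing and convex with $h(0)=0$; the rates are normalized so that $\lambda+\mu_h+\beta=1$ for a discount rate $\beta>0$. Combined (admission + service-rate control) finite-horizon value functions on $S=\{0,1,2,\dots\}\times\{0,1\}$: $v_0\equiv 0$ and for $n\ge 0$: $v_{n+1}(0,0)=\lambda v_n(0,1)+\mu_h v_n(0,0)$; $v_{n+1}(x,0)=-h(x)+\lambda v_n(x,1)+\mu_l v_n(x-1,0)+\max\{\delta v_n(x,0),-c+\delta v_n(x-1,0)\}$ for $x\ge1$; $v_{n+1}(x,1)=\max\{R+v_{n+1}(x+1,0),v_{n+1}(x,0)\}$ for $x\ge 0$. Admission control subproblem (service rate always $\mu_l$): $\hat v_0\equiv0$ and for $n\ge0$: $\hat v_{n+1}(0,0)=\lambda\hat v_n(0,1)+\mu_h\hat v_n(0,0)$; $\hat v_{n+1}(x,0)=-h(x)+\lambda\hat v_n(x,1)+\mu_l\hat v_n(x-1,0)+\delta\hat v_n(x,0)$ for $x\ge1$; $\hat v_{n+1}(x,1)=\max\{R+\hat v_{n+1}(x+1,0),\hat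 v_{n+1}(x,0)\}$ for $x\ge0$. $\Delta_n(x,i)=v_n(x,i)-v_n(x+1,i)$, $\hat\Delta_n(x,i)=\hat v_n(x,i)-\hat v_n(x+1,i)$. Threshold function: $T_f(\theta)=\sup\{k\ge0:f(k)\le\theta\}$ with $\sup\emptyset=-1$ ($+\infty$ allowed). Admission thresholds: $B^d_n=T_{\Delta_n(\cdot,0)}(R)$ and $\hat B^d_n=T_{\hat\Delta_n(\cdot,0)}(R)$. *)

(* Defs.v *)
From Stdlib Require Import Reals Lra Lia ZArith Classical ClassicalEpsilon.
Open Scope R_scope.

(* States (x,i) with x : nat and i : bool, where false = 0 and true = 1. *)

(* Combined (admission + service-rate control) value functions v_n.
   Parameters: lam = lambda, mul = mu_l, muh = mu_h, c, Rr = R, h. *)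
Fixpoint V (lam mul muh c Rr : R) (h : nat -> R) (n : nat) : nat -> bool -> R :=
  match n with
  | O => fun _ _ => 0
  | S m =>
    let vm := V lam mul muh c Rr h m in
    let d := muh - mul in
    let V0 := fun x : nat =>
      match x with
      | O => lam * vm O true + muh * vm O false
      | S y => - h x + lam * vm x true + mul * vm y false
               + Rmax (d * vm x false) (- c + d * vm y false)
      end in
    fun x i => if i then Rmax (Rr + V0 (S x)) (V0 x) else V0 x
  end.

Fixpoint Vhat (lam mul muh Rr : R) (h : nat -> R) (n : nat) : nat -> bool -> R :=
  match n with
  | O => fun _ _ => 0
  | S m =>
    let vm := Vhat lam mul muh Rr h m in
    let d := muh - mul in
    let V0 := fun x : nat =>
      match x with
      | O => lam * vm O true + muh * vm O false
      | S y => - h x + lam * vm x true + mul * vm y false + d * vm x false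
      end in
    fun x i => if i then Rmax (Rr + V0 (S x)) (V0 x) else V0 x
  end.

Definition DeltaN (lam mul muh c Rr : R) (h : nat -> R) (n x : nat) (i : bool) : R :=
  V lam mul muh c Rr h n x i - V lam mul muh c Rr h n (S x) i.
Definition DeltaNhat (lam mul muh Rr : R) (h : nat -> R) (n x : nat) (i : bool) : R :=
  Vhat lam mul muh Rr h n x i - Vhat lam mul muh Rr h n (S x) i.

(* Extended integers {..,-1,0,1,..} U {+infinity} for threshold values. *)
Inductive ezt := EFin (z : Z) | EInf.
Definition ezle (a b : ezt) : Prop :=
  match a, b with
  | _, EInf => True
  | EInf, EFin _ => False
  | EFin x, EFin y => (x <= y)%Z
  end.

Lemma max_exists (P : nat -> Prop) :
  (exists k, P k) -> (exists M, forall k, P k -> (k <= M)%nat) ->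
  exists m, P m /\ forall k, P k -> (k <= m)%nat.
Proof.
  intros [k0 Hk0] [M HM]. revert HM. induction M as [|M IH]; intros HM.
  - exists 0%nat. assert (k0 = 0)%nat by (specialize (HM k0 Hk0); lia). subst. split; auto.
  - destruct (classic (P (S M))) as [HP|HP].
    + exists (S M). split; auto.
    + apply IH. intros k Hk. specialize (HM k Hk).
      destruct (Nat.eq_dec k (S M)); [subst; contradiction | lia].
Qed.

(* Threshold function T_f(theta) = sup {k >= 0 : f k <= theta},
   with sup of the empty set = -1 and +infinity allowed. *)
Definition Tf (f : nat -> R) (theta : R) : ezt :=
  match excluded_middle_informative (exists k, f k <= theta) with
  | right _ => EFin (-1)%Z
  | left Hne =>
    match excluded_middle_informative
            (exists M, forall k, f k <= theta -> (k <= M)%nat) with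
    | right _ => EInf
    | left Hb => EFin (Z.of_nat (proj1_sig
                   (constructive_indefinite_description _ (max_exists _ Hne Hb))))
    end
  end.

Definition Bd (lam mul muh c Rr : R) (h : nat -> R) (n : nat) : ezt :=
  Tf (fun x => DeltaN lam mul muh c Rr h n x false) Rr.
Definition Bdhat (lam mul muh Rr : R) (h : nat -> R) (n : nat) : ezt :=
  Tf (fun x => DeltaNhat lam mul muh Rr h n x false) Rr.

(* Main.v *)
Require Import Defs.
From Stdlib Require Import Reals ZArith Lra Lia Classical ClassicalEpsilon.
Open Scope R_scope.

Lemma max_step (Rr w0 w1 w2 u0 u1 u2 : R) :
  w0 - w1 <= u0 - u1 -> w1 - w2 <= u1 - u2 ->
  Rmax (Rr + w1) w0 - Rmax (Rr + w2) w1 <= Rmax (Rr + u1) u0 - Rmax (Rr + u2) u1.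
Proof.
  intros; unfold Rmax; repeat destruct Rle_dec; lra.
Qed.

Lemma max_nonneg (Rr w0 w1 w2 : R) :
  0 <= Rr -> 0 <= w0 - w1 -> 0 <= w1 - w2 ->
  0 <= Rmax (Rr + w1) w0 - Rmax (Rr + w2) w1.
Proof.
  intros; unfold Rmax; repeat destruct Rle_dec; lra.
Qed.

Lemma hat_props (lam mul muh Rr : R) (h : nat -> R)
  (Hlam : 0 < lam) (Hmul : 0 < mul) (Hmulh : mul < muh) (HR : 0 <= Rr)
  (Hh0 : h 0%nat = 0)
  (Hhmono : forall x : nat, h x <= h (S x))
  (Hhconv : forall x : nat, h (S x) - h x <= h (S (S x)) - h (S x)) :
  forall n x,
    0 <= DeltaNhat lam mul muh Rr h n x false /\
    0 <= DeltaNhat lam mul muh Rr h n x true /\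
    DeltaNhat lam mul muh Rr h n x false <= DeltaNhat lam mul muh Rr h n (S x) false /\
    DeltaNhat lam mul muh Rr h n x true <= DeltaNhat lam mul muh Rr h n (S x) true.
Proof.
  unfold DeltaNhat.
  induction n as [|m IH].
  - intros x; simpl; lra.
  - set (W := fun k => Vhat lam mul muh Rr h m k false).
    set (T := fun k => Vhat lam mul muh Rr h m k true).
    assert (E0 : Vhat lam mul muh Rr h (S m) 0 false = lam * T 0%nat + muh * W 0%nat)
      by reflexivity.
    assert (ES : forall y, Vhat lam mul muh Rr h (S m) (S y) false =
       - h (S y) + lam * T (S y) + mul * W y + (muh - mul) * W (S y)) by reflexivity.
    assert (Et : forall x, Vhat lam mul muh Rr h (S m) x true =
       Rmax (Rr + Vhat lam mul muh Rr h (S m) (S x) false) (Vhat lam mul muh Rr h (S m) x false))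
      by reflexivity.
    assert (Pos : forall x, 0 <= Vhat lam mul muh Rr h (S m) x false - Vhat lam mul muh Rr h (S m) (S x) false).
    { intros [|y].
      - rewrite E0, ES.
        destruct (IH 0%nat) as [A [B _]]. unfold W, T in *.
        pose proof (Hhmono 0%nat).
        assert (0 <= lam * (T 0%nat - T 1%nat)) by (unfold W, T; apply Rmult_le_pos; lra).
        assert (0 <= (muh - mul) * (W 0%nat - W 1%nat)) by (unfold W, T; apply Rmult_le_pos; lra).
        unfold W, T in *; lra.
      - rewrite !ES.
        destruct (IH (S y)) as [A [B _]]. destruct (IH y) as [A' _]. unfold W, T in *.
        pose proof (Hhmono (S y)).
        assert (0 <= lam * (T (S y) - T (S (S y)))) by (unfold W, T; apply Rmult_le_pos; lra).
        assert (0 <= (muh - mul) * (W (S y) - W (S (S y)))) by (unfold W, T; apply Rmult_le_pos; lra).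
        assert (0 <= mul * (W y - W (S y))) by (unfold W, T; apply Rmult_le_pos; lra).
        unfold W, T in *; lra. }
    assert (Conc : forall x,
      Vhat lam mul muh Rr h (S m) x false - Vhat lam mul muh Rr h (S m) (S x) false <=
      Vhat lam mul muh Rr h (S m) (S x) false - Vhat lam mul muh Rr h (S m) (S (S x)) false).
    { intros [|y].
      - rewrite E0, !ES.
        destruct (IH 0%nat) as [A [B [C D]]]. destruct (IH 1%nat) as [A1 [B1 [C1 D1]]].
        unfold W, T in *.
        pose proof (Hhconv 0%nat). rewrite Hh0 in *.
        assert (lam * (T 0%nat - T 1%nat) <= lam * (T 1%nat - T 2%nat)) by (unfold W, T; apply Rmult_le_compat_l; lra).
        assert ((muh - mul) * (W 0%nat - W 1%nat) <= (muh - mul) * (W 1%nat - W 2%nat)) by (unfold W, T; apply Rmult_le_compat_l; lra).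
        assert (0 <= mul * (W 0%nat - W 1%nat)) by (unfold W, T; apply Rmult_le_pos; lra).
        unfold W, T in *; lra.
      - rewrite !ES.
        destruct (IH y) as [A [B [C D]]]. destruct (IH (S y)) as [A1 [B1 [C1 D1]]].
        unfold W, T in *.
        pose proof (Hhconv (S y)).
        assert (lam * (T (S y) - T (S (S y))) <= lam * (T (S (S y)) - T (S (S (S y))))) by (unfold W, T; apply Rmult_le_compat_l; lra).
        assert ((muh - mul) * (W (S y) - W (S (S y))) <= (muh - mul) * (W (S (S y)) - W (S (S (S y))))) by (unfold W, T; apply Rmult_le_compat_l; lra).
        assert (mul * (W y - W (S y)) <= mul * (W (S y) - W (S (S y)))) by (unfold W, T; apply Rmult_le_compat_l; lra).
        unfold W, T in *; lra. }
    intros x. split; [apply Pos|]. split.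
    + rewrite !Et. apply max_nonneg; auto.
    + split; [apply Conc|]. rewrite !Et. apply max_step; apply Conc.
Qed.

Lemma main_ineq (lam mul muh c Rr : R) (h : nat -> R)
  (Hlam : 0 < lam) (Hmul : 0 < mul) (Hmulh : mul < muh) (HR : 0 <= Rr) (Hc : 0 < c)
  (Hh0 : h 0%nat = 0)
  (Hhmono : forall x : nat, h x <= h (S x))
  (Hhconv : forall x : nat, h (S x) - h x <= h (S (S x)) - h (S x)) :
  forall n x,
    DeltaN lam mul muh c Rr h n x false <= DeltaNhat lam mul muh Rr h n x false /\
    DeltaN lam mul muh c Rr h n x true <= DeltaNhat lam mul muh Rr h n x true.
Proof.
  pose proof (hat_props lam mul muh Rr h Hlam Hmul Hmulh HR Hh0 Hhmono Hhconv) as HP.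
  unfold DeltaN, DeltaNhat in *.
  induction n as [|m IH].
  - intros x; simpl; lra.
  - set (W := fun k => Vhat lam mul muh Rr h m k false).
    set (T := fun k => Vhat lam mul muh Rr h m k true).
    set (W' := fun k => V lam mul muh c Rr h m k false).
    set (T' := fun k => V lam mul muh c Rr h m k true).
    assert (E0 : Vhat lam mul muh Rr h (S m) 0 false = lam * T 0%nat + muh * W 0%nat)
      by reflexivity.
    assert (ES : forall y, Vhat lam mul muh Rr h (S m) (S y) false =
       - h (S y) + lam * T (S y) + mul * W y + (muh - mul) * W (S y)) by reflexivity.
    assert (Et : forall x, Vhat lam mul muh Rr h (S m) x true =
       Rmax (Rr + Vhat lam mul muh Rr h (S m) (S x) false) (Vhat lam mul muh Rr h (S m) x false))
      by reflexivity.
    assert (F0 : V lam mul muh c Rr h (S m) 0 false = lam * T' 0%nat + muh * W' 0%nat)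
      by reflexivity.
    assert (FS : forall y, V lam mul muh c Rr h (S m) (S y) false =
       - h (S y) + lam * T' (S y) + mul * W' y
       + Rmax ((muh - mul) * W' (S y)) (- c + (muh - mul) * W' y)) by reflexivity.
    assert (Ft : forall x, V lam mul muh c Rr h (S m) x true =
       Rmax (Rr + V lam mul muh c Rr h (S m) (S x) false) (V lam mul muh c Rr h (S m) x false))
      by reflexivity.
    assert (Z : forall x,
      V lam mul muh c Rr h (S m) x false - V lam mul muh c Rr h (S m) (S x) false <=
      Vhat lam mul muh Rr h (S m) x false - Vhat lam mul muh Rr h (S m) (S x) false).
    { intros [|y].
      - rewrite E0, ES, F0, FS.
        destruct (IH 0%nat) as [A B].
        assert (lam * (T' 0%nat - T' 1%nat) <= lam * (T 0%nat - T 1%nat))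
          by (unfold W, T, W', T'; apply Rmult_le_compat_l; lra).
        assert ((muh - mul) * (W' 0%nat - W' 1%nat) <= (muh - mul) * (W 0%nat - W 1%nat))
          by (unfold W, T, W', T'; apply Rmult_le_compat_l; lra).
        unfold Rmax; destruct Rle_dec; unfold W, T, W', T' in *; lra.
      - rewrite !ES, !FS.
        destruct (IH (S y)) as [A B]. destruct (IH y) as [A' B'].
        destruct (HP m y) as [_ [_ [C _]]].
        assert (lam * (T' (S y) - T' (S (S y))) <= lam * (T (S y) - T (S (S y))))
          by (unfold W, T, W', T'; apply Rmult_le_compat_l; lra).
        assert ((muh - mul) * (W' (S y) - W' (S (S y))) <= (muh - mul) * (W (S y) - W (S (S y))))
          by (unfold W, T, W', T'; apply Rmult_le_compat_l; lra).
        assert ((muh - mul) * (W' y - W' (S y)) <= (muh - mul) * (W (S y) - W (S (S y))))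
          by (unfold W, T, W', T'; apply Rmult_le_compat_l; lra).
        assert (mul * (W' y - W' (S y)) <= mul * (W y - W (S y)))
          by (unfold W, T, W', T'; apply Rmult_le_compat_l; lra).
        unfold Rmax; repeat destruct Rle_dec; unfold W, T, W', T' in *; lra. }
    intros x; split; [apply Z|].
    rewrite Et, Ft, (Et (S x)), (Ft (S x)). apply max_step; apply Z.
Qed.

Lemma Tf_mono (f g : nat -> R) (th : R) :
  (forall k, f k <= g k) -> ezle (Tf g th) (Tf f th).
Proof.
  intros Hfg. unfold Tf.
  destruct (excluded_middle_informative (exists k, g k <= th)) as [Hg|Hg].
  - assert (Hf : exists k, f k <= th).
    { destruct Hg as [k Hk]. exists k. specialize (Hfg k). lra. }
    destruct (excluded_middle_informative (exists k, f k <= th)) as [Hf'|Hf']; [|contradiction].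
    destruct (excluded_middle_informative
       (exists M, forall k, g k <= th -> (k <= M)%nat)) as [Bg|Bg].
    + destruct (excluded_middle_informative
         (exists M, forall k, f k <= th -> (k <= M)%nat)) as [Bf|Bf]; [|exact I].
      match goal with |- ezle (EFin (Z.of_nat (proj1_sig ?a))) (EFin (Z.of_nat (proj1_sig ?b))) =>
        destruct (proj2_sig a) as [Pg _]; destruct (proj2_sig b) as [_ Mf] end.
      simpl. apply inj_le. apply Mf. match goal with |- _ ?x <= _ => specialize (Hfg x) end. lra.
    + destruct (excluded_middle_informative
         (exists M, forall k, f k <= th -> (k <= M)%nat)) as [Bf|Bf]; [|exact I].
      exfalso. apply Bg. destruct Bf as [M HM]. exists M. intros k Hk. apply HM.
      specialize (Hfg k). lra.
  - destruct (excluded_middle_informative (exists k, f k <= th)).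
    + destruct (excluded_middle_informative _); [|exact I]. simpl. lia.
    + simpl. lia.
Qed.

Theorem theorem3 (lam mul muh beta c Rr : R) (h : nat -> R)
  (Hlam : 0 < lam) (Hmul : 0 < mul) (Hmulh : mul < muh) (Hbeta : 0 < beta)
  (Hnorm : lam + muh + beta = 1) (HR : 0 <= Rr) (Hc : 0 < c)
  (Hh0 : h 0%nat = 0)
  (Hhmono : forall x : nat, h x <= h (S x))
  (Hhconv : forall x : nat, h (S x) - h x <= h (S (S x)) - h (S x)) :
  (forall (n x : nat) (i : bool),
      DeltaN lam mul muh c Rr h n x i <= DeltaNhat lam mul muh Rr h n x i)
  /\
  (forall n : nat, (1 <= n)%nat ->
      ezle (Bdhat lam mul muh Rr h n) (Bd lam mul muh c Rr h n)).
Proof.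
  pose proof (main_ineq lam mul muh c Rr h Hlam Hmul Hmulh HR Hc Hh0 Hhmono Hhconv) as M.
  split.
  - intros n x [|]; apply M.
  - intros n _. unfold Bdhat, Bd. apply Tf_mono. intros k. apply M.
Qed.
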